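(* Let $G=(V,E)$ be a finite simple undirected graph, let $M$ be the matching computed by a run of \textsc{MinGreedy} on $G$, and let $M^*$ be a maximum matching of $G$ such that every connected component of $(V,M\cup M^* )$ with an edge is either an edge of $M\cap M^*$ or an $M$-$M^*$-path. Let $w$ be an endpoint of an $M$-$M^*$-path. Then the degree of $w$ in $G$ satisfies $d_G(w)\geq 2$; in particular, $w$ is incident with an edge of $F=E\setminus(M\cup M^* )$.
   Context: \textsc{MinGreedy}: starting with $M=\emptyset$, repeatedly select an arbitrary node $u$ of minimum non-zero current degree and an arbitrary neighbor $v$ of $u$, add $\{u,v\}$ to $M$ and remove all edges incident with $u$ or $v$ from the current graph, until no edges remain. An $M$-$M^*$-path is a connected component of $(V,M\cup M^* )$ that is an alternating path starting and ending with an $M^*$-edge and containing $m\geq1$ edges of $M$ and $m+1$ edges of $M^*$; its endpoints are its two end nodes (which are not covered by $M$). *)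

(* Defs.v *)
(* A finite simple undirected graph is a symmetric,
   irreflexive relation e on a finType V.  Edges are 2-element sets {x,y}. *)
From mathcomp Require Import all_boot.
Set Implicit Arguments. Unset Strict Implicit. Unset Printing Implicit Defensive.

Section Defs.
Variable V : finType.
Implicit Types (e : rel V) (C : {set V}) (M Ms : {set {set V}}).

Definition is_edge e (f : {set V}) : bool :=
  [exists x, exists y, e x y && (f == [set x; y])].

Definition deg e (x : V) : nat := #|[set y | e x y]|.

Definition matching e M : Prop :=
  (forall f, f \in M -> is_edge e f) /\
  (forall f g, f \in M -> g \in M -> f != g -> [disjoint f & g]).

Definition max_matching e M : Prop :=
  matching e M /\ forall M', matching e M' -> #|M'| <= #|M|.

(* current graph of MinGreedy after the nodes in C have been matched:
   all edges incident with a node of C have been removed *)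
Definition cur e C : rel V := fun x y => [&& e x y, x \notin C & y \notin C].
Definition cdeg e C (x : V) : nat := #|[set y | cur e C x y]|.

(* s = [:: (u1,v1); ...; (uk,vk)] is a (complete) run of MinGreedy from the
   current graph determined by C: at each step u has minimum non-zero current
   degree and v is a current neighbour of u; at the end no edge remains. *)
Fixpoint mg_run e C (s : seq (V * V)) : bool :=
  match s with
  | [::] => [forall x, forall y, ~~ cur e C x y]
  | (u, v) :: s' =>
      [&& cur e C u v,
          [forall x, (0 < cdeg e C x) ==> (cdeg e C u <= cdeg e C x)]
        & mg_run e (u |: (v |: C)) s']
  end.

Definition greedyM (s : seq (V * V)) : {set {set V}} :=
  [set ([set p.1; p.2] : {set V}) | p in s].

Definition Hrel M Ms : rel V := fun x y => [set x; y] \in M :|: Ms.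

Definition path_edges (p : seq V) : seq {set V} :=
  [seq [set a.1; a.2] | a <- zip p (behead p)].

(* the vertex sequence p = x0 x1 ... x_{2m+1} (m >= 1) spans a connected
   component of (V, M u Mstar) which is an alternating path whose edges are,
   in order, in Mstar, M, Mstar, ..., Mstar; the edges of (V, M u Mstar) incident with a
   vertex of p are exactly the path edges. *)
Definition MMpath M Ms (p : seq V) : Prop :=
  [/\ uniq p, 4 <= size p, ~~ odd (size p),
      (forall i, i < size (path_edges p) ->
         nth set0 (path_edges p) i \in (if odd i then M else Ms))
    & [set f in M :|: Ms | [exists x in p, x \in f]] = [set f in path_edges p]].

Definition components_ok M Ms : Prop :=
  forall x, (exists y, Hrel M Ms x y) ->
    (exists y, [set x; y] \in M :&: Ms /\
               [set z | connect (Hrel M Ms) x z] = [set x; y])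
    \/ (exists p, MMpath M Ms p /\ x \in p).

End Defs.

(* Main.v *)
Require Import Defs.
From mathcomp Require Import all_boot.
From mathcomp Require Import zify.

Section Aux.
Set Implicit Arguments. Unset Strict Implicit.
Variable V : finType.
Variable e : rel V.

Lemma cur_sub (C C' : {set V}) x y : C \subset C' -> cur e C' x y -> cur e C x y.
Proof.
move=> /subsetP sub /and3P[h1 h2 h3]; rewrite /cur h1 /=.
by rewrite (contra (sub _) h2) (contra (sub _) h3).
Qed.

Lemma run_cur C s : mg_run e C s -> forall q, q \in s -> cur e C q.1 q.2.
Proof.
elim: s C => [//|[a b] s IH] C /= /and3P[hab _ hr] q.
rewrite in_cons => /orP[/eqP -> //|qs].
apply: cur_sub (IH _ hr q qs).
by apply/subsetP=> z zC; rewrite !inE zC !orbT.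
Qed.

Lemma run_later C a b s : mg_run e C ((a,b)::s) -> forall q, q \in s ->
  [&& q.1 != a, q.1 != b, q.2 != a & q.2 != b].
Proof.
move=> /= /and3P[_ _ hr] q qs.
have /and3P[_ h1 h2] := run_cur hr qs.
by move: h1 h2; rewrite !inE !negb_or => /and3P[-> -> _] /and3P[-> -> _].
Qed.

Lemma first_step (P : {set V}) : forall s C, mg_run e C s ->
  (forall z, z \in P -> z \notin C) ->
  has (fun q => (q.1 \in P) || (q.2 \in P)) s ->
  exists C' u v s', [/\ mg_run e C' ((u,v)::s'),
    (forall z, z \in P -> z \notin C'), (u,v) \in s, (u \in P) || (v \in P) &
    forall q, q \in s -> (q.1 \in P) || (q.2 \in P) ->
      q = (u,v) \/ [&& q.1 != u, q.1 != v, q.2 != u & q.2 != v]].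
Proof.
elim=> [//|[a b] s IH] C hr hd hh.
case: (boolP ((a \in P) || (b \in P))) => hab.
  exists C, a, b, s; split => //; first by rewrite mem_head.
  move=> q; rewrite in_cons => /orP[/eqP ->|qs] _; [by left|right].
  exact: (run_later hr qs).
have hs : has (fun q => (q.1 \in P) || (q.2 \in P)) s.
  by move: hh; rewrite /= (negbTE hab).
move: (hr) => /= /and3P[_ _ hr'].
have hd' : forall z, z \in P -> z \notin a |: (b |: C).
  move=> z zP; rewrite !inE; apply/negP => /or3P[/eqP zA|/eqP zB|zC].
  - by move: hab; rewrite -zA zP.
  - by move: hab; rewrite -zB zP orbT.
  - by move: (hd z zP); rewrite zC.
have [C' [u [v [s' [h1 h2 h3 h4 h5]]]]] := IH _ hr' hd' hs.
exists C', u, v, s'; split => //; first by rewrite in_cons h3 orbT.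
move=> q; rewrite in_cons => /orP[/eqP -> /= | qs]; last exact: h5.
by rewrite (negbTE hab).
Qed.

Lemma size_pe (p : seq V) : size (path_edges p) = (size p).-1.
Proof.
rewrite /path_edges size_map size_zip size_behead; apply/minn_idPr; exact: leq_pred.
Qed.

Lemma nth_pe (p : seq V) d i : i < (size p).-1 ->
  nth set0 (path_edges p) i = [set nth d p i; nth d p i.+1].
Proof.
move=> hi; rewrite /path_edges (nth_map (d,d)); last by rewrite size_zip size_behead (minn_idPr (leq_pred _)).
rewrite nth_zip_cond size_zip size_behead.
have -> : i < minn (size p) (size p).-1 by rewrite (minn_idPr (leq_pred _)).
by rewrite /= nth_behead.
Qed.

Lemma mem_pe (p : seq V) d f : f \in path_edges p ->
  exists2 i, i < (size p).-1 & f = [set nth d p i; nth d p i.+1].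
Proof.
move/(nthP set0) => [i hi <-]; rewrite size_pe in hi; exists i => //; exact: nth_pe.
Qed.

Lemma set2_edge (a b x y : V) : symmetric e ->
  [set x; y] = [set a; b] -> e x y -> e a b.
Proof.
move=> esym hs hxy.
have ha : a \in [set x; y] by rewrite hs set21.
have hb : b \in [set x; y] by rewrite hs set22.
have hx : x \in [set a; b] by rewrite -hs set21.
have hy : y \in [set a; b] by rewrite -hs set22.
case/set2P: ha => ha; case/set2P: hb => hb; subst a b => //.
- by case/set2P: hy => hy; case/set2P: hx => hx; subst.
- by rewrite esym.
- by case/set2P: hy => hy; case/set2P: hx => hx; subst.
Qed.

Lemma disj4 (a b c d z : V) : z \in [set a; b] -> z \in [set c; d] ->
  [&& a != c, a != d, b != c & b != d] -> False.
Proof. by case/set2P => ->; case/set2P => ->; rewrite eqxx /= ?andbF. Qed.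

End Aux.

Ltac alia := repeat match goal with
 | H : is_true (leq _ _) |- _ => revert H
 | H : is_true (odd _) |- _ => revert H
 | H : is_true (~~ odd _) |- _ => revert H
 | H : is_true (@eq_op nat _ _) |- _ => revert H
 | H : is_true (~~ (@eq_op nat _ _)) |- _ => revert H
 | H : @eq nat _ _ |- _ => revert H
 end; clear; lia.

Theorem lemma2 (V : finType) (e : rel V) (s : seq (V * V))
    (Ms : {set {set V}}) (w : V) :
  symmetric e -> irreflexive e ->
  mg_run e set0 s ->
  max_matching e Ms ->
  components_ok (greedyM s) Ms ->
  (exists p, MMpath (greedyM s) Ms p /\ (w = head w p \/ w = last w p)) ->
  2 <= deg e w /\ exists y, e w y /\ [set w; y] \notin greedyM s :|: Ms.
Proof.
move=> esym eirr hrun [[hMe _] _] _ [p [[hu h4 hev hpe hinc] hw]].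
pose x i := nth w p i.
have xP : forall i, i < size p -> x i \in p := fun i hi => mem_nth w hi.
have xinj : forall i j, x i = x j -> i < size p -> j < size p -> i = j.
  by move=> i j /eqP h hi hj; move: h; rewrite /x nth_uniq // => /eqP.
have edge_e : forall f a b, f \in greedyM s :|: Ms -> f = [set a; b] -> e a b.
  move=> f a b /setUP[/imsetP[q qs ->]|/hMe].
  - move=> hq; apply: (set2_edge esym hq).
    by case/and3P: (run_cur hrun qs).
  - move=> /existsP[y1 /existsP[y2 /andP[hy /eqP ->]]] hq.
    exact: (set2_edge esym hq hy).
have pe_in : forall i, i < (size p).-1 -> [set x i; x i.+1] \in greedyM s :|: Ms.
  move=> i hi; have := hpe i; rewrite size_pe (nth_pe w) // => /(_ hi).
  by case: (odd i) => h; rewrite inE h ?orbT.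
have pe_edge : forall i, i < (size p).-1 -> e (x i) (x i.+1).
  by move=> i hi; apply: (edge_e _ _ _ (pe_in i hi)).
have inM : forall i, i < (size p).-1 -> odd i -> [set x i; x i.+1] \in greedyM s.
  by move=> i hi hodd; have := hpe i; rewrite size_pe (nth_pe w) // hodd => /(_ hi).
have inc : forall f z, f \in greedyM s :|: Ms -> z \in p -> z \in f ->
    exists2 i, i < (size p).-1 & f = [set x i; x i.+1].
  move=> f z hf hz hzf.
  have : f \in [set f in path_edges p].
    by rewrite -hinc inE hf /=; apply/existsP; exists z; rewrite hz hzf.
  by rewrite inE => /(mem_pe w).
have Eneq : forall i j, i < (size p).-1 -> j < (size p).-1 -> i != j ->
    [set x i; x i.+1] != [set x j; x j.+1].
  move=> i j hi hj hij; apply/negP => /eqP h.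
  have : x i \in [set x j; x j.+1] by rewrite -h set21.
  have : x i.+1 \in [set x j; x j.+1] by rewrite -h set22.
  case/set2P => h1; case/set2P => h2;
    have := xinj _ _ h1 ltac:(lia) ltac:(lia);
    have := xinj _ _ h2 ltac:(lia) ltac:(lia); lia.
have [k [k' [hwk hkk]]] : exists k k', w = x k /\
    ((k = 0 /\ k' = 1) \/ (k = (size p).-1 /\ k' = (size p).-2)).
  case: hw => hw; [exists 0, 1 | exists (size p).-1, (size p).-2]; split.
  - by rewrite /x nth0.
  - by left.
  - by rewrite /x nth_last.
  - by right.
have hk : k < size p by lia.
have hk' : k' < size p by lia.
have F1 : e w (x k').
  case: hkk => [[k0 ->]|[k0 ->]]; rewrite hwk k0.
  - by apply: pe_edge; lia.
  - rewrite esym; have := pe_edge (size p).-2 ltac:(lia).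
    by have -> : (size p).-2.+1 = (size p).-1 by lia.
have F2 : forall y, e w y -> [set w; y] \in greedyM s :|: Ms -> y = x k'.
  move=> y ewy hin.
  have wp : w \in p by rewrite hwk xP.
  have [i hi hE] := inc _ w hin wp (set21 _ _).
  have yw : y != w by apply/negP => /eqP yw; move: ewy; rewrite yw eirr.
  have : w \in [set x i; x i.+1] by rewrite -hE set21.
  have : y \in [set x i; x i.+1] by rewrite -hE set22.
  rewrite hwk in yw *.
  case/set2P => hy; case/set2P => h1.
  - by move: yw; rewrite hy h1 eqxx.
  - have := xinj _ _ h1 ltac:(lia) ltac:(lia) => ki.
    rewrite hy; congr x; lia.
  - have := xinj _ _ h1 ltac:(lia) ltac:(lia) => ki.
    rewrite hy; congr x; lia.
  - by move: yw; rewrite hy h1 eqxx.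
have first : 2 <= deg e w.
  rewrite leqNgt; apply/negP => hdeg.
  pose P := [set z | z \in p].
  have hP : forall z, z \in P -> z \notin set0 by move=> z _; rewrite in_set0.
  have hh : has (fun q => (q.1 \in P) || (q.2 \in P)) s.
    have /imsetP[q qs hq] := inM 1 ltac:(alia) erefl.
    apply/hasP; exists q => //.
    have : q.1 \in [set x 1; x 2] by rewrite hq set21.
    by case/set2P => ->; rewrite /P inE xP //; alia.
  have [C' [u [v [s' [hr' hd' huv hPuv hq]]]]] := first_step hrun hP hh.
  move: hr' => /= /and3P[hcur hmin _].
  have notC : forall j, j < size p -> x j \notin C'.
    by move=> j hj; apply: hd'; rewrite inE xP.
  have uvM : [set u; v] \in greedyM s by apply/imsetP; exists (u, v).
  have uvMM : [set u; v] \in greedyM s :|: Ms by rewrite inE uvM.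
  have [i hi hEi] : exists2 i, i < (size p).-1 & [set u; v] = [set x i; x i.+1].
    move: hPuv; rewrite !inE => /orP[hz|hz].
    - exact: (inc _ _ uvMM hz (set21 _ _)).
    - exact: (inc _ _ uvMM hz (set22 _ _)).
  have hcw : 0 < cdeg e C' w.
    apply/card_gt0P; exists (x k'); rewrite inE /cur F1 /= hwk !notC //.
  have hcw2 : cdeg e C' w <= 1.
    apply: leq_trans _ (_ : deg e w <= 1); last by alia.
    by apply: subset_leq_card; apply/subsetP => y; rewrite !inE => /and3P[-> _ _].
  have hcu : cdeg e C' u <= 1.
    by have := forallP hmin w; rewrite hcw /= => h; apply: leq_trans h hcw2.
  have shared : forall i', i' < (size p).-1 -> odd i' -> forall z,
      z \in [set x i'; x i'.+1] -> z \in [set u; v] -> i' != i -> False.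
    move=> i' hi' ho z hz1 hz2 hne.
    have /imsetP[q qs hqe] := inM i' hi' ho.
    have touch : (q.1 \in P) || (q.2 \in P).
      have : q.1 \in [set x i'; x i'.+1] by rewrite hqe set21.
      have hi1 : i' < size p by alia.
      have hi2 : i'.+1 < size p by alia.
      by case/set2P => ->; rewrite /P inE ?(xP _ hi1) ?(xP _ hi2).
    case: (hq q qs touch) => [qe|hd4].
    - have e1 : [set x i'; x i'.+1] = [set x i; x i.+1].
        by rewrite hqe qe; exact: hEi.
      by case/negP: (Eneq _ _ hi' hi hne); apply/eqP; exact: e1.
    - by apply: (disj4 _ _ hd4); [rewrite -hqe; exact: hz1 | exact: hz2].
  have interior : forall j, 0 < j < (size p).-1 -> 2 <= cdeg e C' (x j).
    move=> j /andP[hj1 hj2].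
    have hne : x j.-1 != x j.+1.
      by apply/negP => /eqP h; have := xinj _ _ h ltac:(alia) ltac:(alia); alia.
    have c2 : #|[set x j.-1; x j.+1]| = 2 by rewrite cards2 hne.
    rewrite -c2; apply: subset_leq_card; apply/subsetP => y.
    case/set2P => ->; rewrite inE /cur !notC ?andbT; try alia.
    - rewrite esym; have := pe_edge j.-1 ltac:(alia).
      by have -> : j.-1.+1 = j by alia.
    - by apply: pe_edge; alia.
  have hu' : u \in [set x i; x i.+1] by rewrite -hEi set21.
  case: (posnP i) => [i0|ipos].
    apply: (shared 1 ltac:(alia) erefl (x 1)); first by rewrite set21.
    - by rewrite hEi i0 set22.
    - by rewrite i0.
  case: (ltngtP i (size p).-2) => hi2.
  - case/set2P: hu' => hu'; rewrite hu' in hcu.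
    + by have := interior i ltac:(alia); alia.
    + by have := interior i.+1 ltac:(alia); alia.
  - alia.
  - apply: (shared (size p).-2.-1 ltac:(alia) _ (x (size p).-2)).
    + have -> : (size p).-2.-1 = size p - 3 by alia.
      by rewrite oddB; [rewrite (negbTE hev) | alia].
    + have -> : (size p).-2.-1.+1 = (size p).-2 by alia.
      by rewrite set22.
    + by rewrite hEi hi2 set21.
    + apply/eqP; alia.
split=> //.
have : 0 < #|[set y | e w y] :\ x k'|.
  by move: first; rewrite /deg (cardsD1 (x k')); case: (_ \in _) => /=; alia.
case/card_gt0P => y; rewrite !inE => /andP[hy ewy].
exists y; split => //; apply/negP => /(F2 _ ewy) h.
by move: hy; rewrite h eqxx.
Qed.
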